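(* Let $t$ be transcendental over $\mathbb{Q}$, let $R=\mathbb{Z}[t^2,t^3]$, and let $S$ be the integral closure of $R$ in its field of fractions $\mathbb{Q}(t)$. Then $S=\mathbb{Z}[t]\neq R$, and every monic polynomial in $R[x]$ of degree at least $2$ that is decomposable over $S$ is decomposable over $R$.
   Context: For a ring $A$ and $f\in A[x]$ with $\deg f\ge 2$, $f$ is called decomposable over $A$ if $f(x)=g(h(x))$ for some $g,h\in A[x]$ of degree at least $2$, and indecomposable over $A$ otherwise. *)

(* Defs.v *)
From HB Require Import structures.
From mathcomp Require Import all_boot all_order all_algebra.
Set Implicit Arguments. Unset Strict Implicit. Unset Printing Implicit Defensive.
Import Order.TTheory GRing.Theory Num.Theory.
Local Open Scope ring_scope.

Definition transcendental_over_Q (L : fieldType) (t : L) : Prop :=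
  forall p : {poly rat}, root (map_poly (fun q : rat => ratr q) p) t -> p = 0.

Definition Zt (L : fieldType) (t : L) : L -> Prop :=
  fun z => exists p : {poly int}, z = (map_poly (fun n : int => n%:~R) p).[t].

(* Z[t^2, t^3] = { q(t) : q in Z[x], coefficient of x^1 in q is 0 } *)
Definition Zt2t3 (L : fieldType) (t : L) : L -> Prop :=
  fun z => exists p : {poly int},
    p`_1 = 0 /\ z = (map_poly (fun n : int => n%:~R) p).[t].

Definition frac_field (L : fieldType) (A : L -> Prop) : L -> Prop :=
  fun z => exists a b, A a /\ A b /\ b != 0 /\ z = a / b.

Definition coefs_in (L : fieldType) (A : L -> Prop) (p : {poly L}) : Prop :=
  forall i, A p`_i.

Definition integral_over (L : fieldType) (A : L -> Prop) (z : L) : Prop :=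
  exists p : {poly L}, p \is monic /\ coefs_in A p /\ root p z.

Definition integral_closure (L : fieldType) (A : L -> Prop) : L -> Prop :=
  fun z => frac_field A z /\ integral_over A z.

(* f = g(h(x)) with g, h in A[x] of degree >= 2 (deg f >= 2) *)
Definition decomposable_over (L : fieldType) (A : L -> Prop) (f : {poly L}) : Prop :=
  (2 < size f)%N /\
  exists g h : {poly L}, coefs_in A g /\ coefs_in A h /\
    (2 < size g)%N /\ (2 < size h)%N /\ f = g \Po h.

(* Main.v *)
Require Import Defs.
From HB Require Import structures.
From mathcomp Require Import all_boot all_order all_algebra.
From mathcomp Require Import ring zify.
From Stdlib Require Import ClassicalEpsilon.
Import Order.TTheory GRing.Theory Num.Theory.
Local Open Scope ring_scope.
Set Implicit Arguments. Unset Strict Implicit. Unset Printing Implicit Defensive.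


Definition E0 (P : {poly {poly int}}) : {poly int} := map_poly (horner_eval 0) P.
Definition E1 (P : {poly {poly int}}) : {poly int} := map_poly (coefp 1) P.
HB.instance Definition _ := GRing.RMorphism.copy E0 (map_poly (horner_eval (0 : int))).
HB.instance Definition _ := GRing.Additive.copy E1 (map_poly (coefp 1 : {poly int} -> int)).

Lemma E0c P i : (E0 P)`_i = P`_i`_0.
Proof. by rewrite coef_map /= horner_evalE horner_coef0. Qed.
Lemma E1c P i : (E1 P)`_i = P`_i`_1.
Proof. by rewrite coef_map. Qed.

Lemma coef1M (a b : {poly int}) : (a * b)`_1 = a`_0 * b`_1 + a`_1 * b`_0.
Proof. by rewrite coefM big_ord_recr big_ord_recr big_ord0 /= add0r. Qed.

Lemma E1M P Q : E1 (P * Q) = E1 P * E0 Q + E0 P * E1 Q.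
Proof.
apply/polyP => i; rewrite coefD !coefM E1c coefM -big_split /= coef_sum.
apply: eq_bigr => j _; rewrite coef1M !E0c !E1c addrC.
done.
Qed.

Lemma E1X : E1 'X = 0.
Proof. by apply/polyP => i; rewrite E1c coefX coef0; case: (i == 1%N); rewrite ?coef1 ?coef0. Qed.

Lemma E1C c : E1 c%:P = (c`_1)%:P.
Proof. by rewrite /E1 map_polyC. Qed.

Lemma E0C c : E0 c%:P = (c`_0)%:P.
Proof. by rewrite /E0 map_polyC /= horner_evalE horner_coef0. Qed.

Lemma E0_comp P H : E0 (P \Po H) = E0 P \Po E0 H.
Proof. exact: map_comp_poly. Qed.
Lemma E0X : E0 'X = 'X.
Proof. exact: map_polyX. Qed.

Lemma E1_comp P H : E1 (P \Po H) = E1 P \Po E0 H + ((E0 P)^`() \Po E0 H) * E1 H.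
Proof.
elim/poly_ind: P => [|P c IH].
  by rewrite comp_poly0 !raddf0 /= mul0r addr0.
rewrite comp_polyD comp_polyM comp_polyX comp_polyC raddfD /= E1M IH E1C.
rewrite E0_comp raddfD /= E1M E1X E1C [E0 (_ + _)]rmorphD /= [E0 (_ * _)]rmorphM /= E0X E0C derivMXaddC.
rewrite mulr0 addr0.
rewrite !(comp_polyD, comp_polyM, comp_polyX, comp_polyC).
ring.
Qed.



Lemma size_gt_coef (p : {poly int}) i : p`_i != 0 -> (i < size p)%N.
Proof. by apply: contraNT; rewrite -leqNgt => h; rewrite nth_default. Qed.

Lemma E0_monic P : P \is monic -> E0 P \is monic /\ size (E0 P) = size P.
Proof.
move=> /monicP mP.
have h1 : horner_eval (0:int) (lead_coef P) != 0 by rewrite mP /= horner_evalE hornerC.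
split; last exact: size_map_poly_id0.
by apply/monicP; rewrite lead_coef_map_id0 ?rmorph0 // mP /= horner_evalE hornerC.
Qed.

Lemma size_deriv_monic (g : {poly int}) : g \is monic -> (0 < size g)%N ->
  size g^`() = (size g).-1.
Proof.
move=> mg sg; apply/eqP; rewrite eqn_leq; apply/andP; split.
  case: (eqVneq g 0) => [->|nz]; first by rewrite deriv0 size_poly0.
  by have := lt_size_deriv nz; case: (size g) sg.
case E: (size g) sg => [//|n] _ /=.
case: n E => [//|n] E.
apply: size_gt_coef; rewrite coef_deriv.
have -> : g`_n.+1 = 1 by move/monicP: mg; rewrite /lead_coef E.
by rewrite pnatr_eq0.
Qed.

Lemma key_deg (G H : {poly {poly int}}) : H \is monic -> H`_0 = 0 ->
  G \is monic -> (2 < size G)%N -> (2 < size H)%N -> E1 (G \Po H) = 0 ->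
  E1 G = 0 /\ E1 H = 0.
Proof.
move=> mH H0 mG sG sH.
have [mh0 sh0] := E0_monic mH.
have [mg0 sg0] := E0_monic mG.
rewrite E1_comp.
set h0 := E0 H; set g0 := E0 G; set k := E1 H; set g1 := E1 G.
have k0 : k`_0 = 0 by rewrite /k E1c H0 coef0.
have sk : (size k <= (size H).-1)%N.
  apply/leq_sizeP => j hj; rewrite /k E1c.
  move: hj; rewrite leq_eqVlt => /orP [/eqP <-|hj].
    by move/monicP: mH; rewrite /lead_coef => ->; rewrite coef1.
  have hj2 : (size H <= j)%N by move: hj; case: (size H).
  by rewrite (nth_default 0 hj2) coef0.
have sh1 : (1 < size h0)%N by rewrite sh0; case: (size H) sH => [|[|[]]].
have dg : size g0^`() = (size G).-1 by rewrite size_deriv_monic // sg0; case: (size G) sG.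
have g'nz : g0^`() != 0 by rewrite -size_poly_eq0 dg; case: (size G) sG => [|[|[]]].
have cnz : g0^`() \Po h0 != 0 by rewrite comp_poly_eq0.
have sc : size (g0^`() \Po h0) = (((size G).-2) * (size H).-1).+1.
  have := size_comp_poly (g0^`()) h0; rewrite dg sh0.
  have : size (g0^`() \Po h0) != 0%N by rewrite size_poly_eq0.
  by case: (size (g0^`() \Po h0)) => // n _ /= ->.
case: (eqVneq k 0) => [k0'|knz].
  rewrite k0' mulr0 addr0 => /eqP; rewrite comp_poly_eq0 // => /eqP ->; done.
move/eqP; rewrite addr_eq0 => /eqP e; exfalso.
have sk2 : (2 <= size k)%N.
  case E: (size k) => [|[|n]] //.
    by move/eqP: E; rewrite size_poly_eq0 (negPf knz).
  have := size1_polyC (eq_leq E); rewrite k0 => ek; by rewrite ek eqxx in knz.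
have g1nz : g1 != 0.
  apply/eqP => g10; move: e; rewrite g10 comp_poly0 => /esym/eqP.
  by rewrite oppr_eq0 (negPf (mulf_neq0 cnz knz)).
have sl : size (g1 \Po h0) = (((size g1).-1) * (size H).-1).+1.
  have := size_comp_poly g1 h0; rewrite sh0.
  have : size (g1 \Po h0) != 0%N by rewrite size_poly_eq0 comp_poly_eq0.
  by case: (size (g1 \Po h0)) => // n _ /= ->.
have := congr1 (fun p : {poly int} => size p) e; rewrite /= size_polyN size_mul // sc sl.
move: sk sk2 sG sH; set m := (size g1).-1; set s := size k.
set d := size G; set ee := size H => hs1 hs2 hd he.
move=> h; have hE : (2 <= ee.-1)%N by lia.
move: h hs1 hs2 hE; clearbody m s; generalize (ee.-1) (d.-2) m s => E D M S h h1 h2 h3.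
case: (leqP M D) => hM.
  have : (M * E <= D * E)%N by rewrite leq_mul2r hM orbT.
  lia.
have : (D.+1 * E <= M * E)%N by rewrite leq_mul2r hM orbT.
lia.
Qed.


Lemma homog (R : comNzRingType) n (p : nat -> R) X Y Z :
  \sum_(i < n.+1) p i * (X * Z) ^+ i * (Y * Z) ^+ (n - i) =
  Z ^+ n * \sum_(i < n.+1) p i * X ^+ i * Y ^+ (n - i).
Proof.
rewrite big_distrr; apply: eq_bigr => i _ /=.
have hi : (i <= n)%N by rewrite -ltnS ltn_ord.
rewrite !exprMn; have -> : Z ^+ n = Z ^+ i * Z ^+ (n - i) by rewrite -exprD subnKC.
ring.
Qed.

Notation iQ := (map_poly (intr : int -> rat)).

Lemma iQ_inj : injective iQ.
Proof. apply: map_inj_poly; [exact: intr_inj | by rewrite rmorph0]. Qed.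

Lemma zcontentsX (p : {poly int}) n : zcontents (p ^+ n) = zcontents p ^+ n.
Proof.
elim: n => [|n IH]; first by rewrite !expr0 zcontents_monic ?monic1.
by rewrite !exprS zcontentsM IH.
Qed.

Lemma gauss_rat (P : {poly {poly int}}) n (W : {poly rat}) : P`_n = 1 ->
  \sum_(i < n.+1) iQ P`_i * W ^+ i = 0 -> exists V, W = iQ V.
Proof.
move=> Pn hW.
case: (rat_poly_scale W) => q [a a0 eW].
case: (eqVneq q 0) => [q0 | qnz].
  by exists 0; rewrite eW q0 !rmorph0 scaler0.
set q' := zprimitive q.
set r : rat := (zcontents q)%:~R / a%:~R.
have eW1 : W = r *: iQ q'.
  rewrite eW {1}(zpolyEprim q) map_polyZ /= scalerA /r mulrC; done.
set u := numq r; set v := denq r.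
have vnz : (v%:~R : rat) != 0 by rewrite intr_eq0 denq_eq0.
set U := u *: q'.
have eW2 : W = (v%:~R^-1)%:P * iQ U.
  rewrite eW1 /U map_polyZ /= mul_polyC scalerA -(divq_num_den r) mulrC.
  done.
have hsum : \sum_(i < n.+1) iQ P`_i * W ^+ i =
   (v%:~R^-1)%:P ^+ n * \sum_(i < n.+1) iQ P`_i * iQ U ^+ i * (v%:~R)%:P ^+ (n - i).
  rewrite -(homog n (fun i => iQ P`_i)); apply: eq_bigr => i _.
  by rewrite -polyCM divff // expr1n mulr1 eW2 [X in _ * X ^+ _ = _]mulrC.
move: hW; rewrite hsum => /eqP; rewrite mulf_eq0 expf_eq0 polyC_eq0 invr_eq0 (negPf vnz) andbF /=.
move=> /eqP hs.
have hi : \sum_(i < n.+1) P`_i * U ^+ i * (v%:P) ^+ (n - i) = 0.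
  apply: iQ_inj; rewrite rmorph0 -{}hs rmorph_sum; apply: eq_bigr => i _.
  by rewrite !rmorphM !rmorphXn /= map_polyC.
move: hi; rewrite big_ord_recr /= Pn subnn expr0 mul1r mulr1.
have -> : \sum_(i < n) P`_(widen_ord (leqnSn n) i) * U ^+ (widen_ord (leqnSn n) i) * v%:P ^+ (n - widen_ord (leqnSn n) i)
   = v *: \sum_(i < n) P`_i * U ^+ i * v%:P ^+ (n.-1 - i).
  rewrite scaler_sumr; apply: eq_bigr => i _ /=.
  have -> : (n - i = (n.-1 - i).+1)%N by have := ltn_ord i; lia.
  by rewrite exprS -mul_polyC; ring.
move=> /eqP; rewrite addr_eq0 => /eqP eU.
have hc := congr1 zcontents eU.
rewrite -scaleN1r !zcontentsZ zcontentsX /U zcontentsZ zcontents_primitive qnz mulr1 in hc.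
have hd : (`|v| %| `|u| ^ n)%N.
  by rewrite -abszX -(abszN (u ^+ n)) -mulN1r -hc abszM dvdn_mulr.
have cop : coprime `|v| (`|u| ^ n) by rewrite coprimeXr // coprime_sym coprime_num_den.
have v1 : `|v|%N = 1%N by move: cop; rewrite /coprime (gcdn_idPl hd) => /eqP.
have v1' : v = 1.
  have h : (0 < v) by exact: denq_gt0.
  by rewrite -(gtr0_norm h) -abszE v1.
exists U; rewrite eW2 v1' invr1 mul1r; done.
Qed.

Lemma int_closed (A B : {poly int}) (P : {poly {poly int}}) n : B != 0 -> P`_n = 1 ->
  \sum_(i < n.+1) P`_i * A ^+ i * B ^+ (n - i) = 0 -> exists V, A = B * V.
Proof.
move=> Bnz Pn hs.
set AQ := iQ A; set BQ := iQ B.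
have BQnz : BQ != 0.
  by apply: contraNneq Bnz => h; apply/eqP; apply: iQ_inj; rewrite rmorph0; exact: h.
have hsQ : \sum_(i < n.+1) iQ P`_i * AQ ^+ i * BQ ^+ (n - i) = 0.
  rewrite -[RHS](rmorph0 iQ) -[in RHS]hs rmorph_sum; apply: eq_bigr => i _.
  by rewrite !rmorphM !rmorphXn.
set g := gcdp AQ BQ.
have gnz : g != 0 by rewrite gcdp_eq0 negb_and BQnz orbT.
set A1 := AQ %/ g; set B1 := BQ %/ g.
have eA : AQ = A1 * g by rewrite divpK // dvdp_gcdl.
have eB : BQ = B1 * g by rewrite divpK // dvdp_gcdr.
have cop : coprimep A1 B1 by apply: coprimep_div_gcd; rewrite BQnz orbT.
have hs1 : \sum_(i < n.+1) iQ P`_i * A1 ^+ i * B1 ^+ (n - i) = 0.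
  move: hsQ; rewrite eA eB (homog n (fun i => iQ P`_i)) => /eqP.
  by rewrite mulf_eq0 expf_eq0 (negPf gnz) andbF /= => /eqP.
move: hs1; rewrite big_ord_recr /= Pn subnn expr0 mulr1 rmorph1 mul1r.
have -> : \sum_(i < n) iQ P`_(widen_ord (leqnSn n) i) * A1 ^+ (widen_ord (leqnSn n) i) * B1 ^+ (n - widen_ord (leqnSn n) i)
   = B1 * \sum_(i < n) iQ P`_i * A1 ^+ i * B1 ^+ (n.-1 - i).
  rewrite big_distrr; apply: eq_bigr => i _ /=.
  have -> : (n - i = (n.-1 - i).+1)%N by have := ltn_ord i; lia.
  by rewrite exprS; ring.
move=> /eqP; rewrite addr_eq0 => /eqP eA1.
have dv : B1 %| 1 * A1 ^+ n by rewrite mul1r -[A1 ^+ n]opprK -eA1 -mulrN dvdp_mulIl.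
rewrite Gauss_dvdpl in dv; last by apply: coprimep_expr; rewrite coprimep_sym.
rewrite dvdp1 in dv.
set c := B1`_0.
have eB1 : B1 = c%:P by apply: size1_polyC; rewrite (eqP dv).
have cnz : c != 0 by apply: contraTneq dv => c0; rewrite eB1 c0 size_poly0.
set W := (c^-1)%:P * A1.
have eAW : AQ = BQ * W.
  by rewrite eA eB eB1 /W mulrACA -polyCM divff // mul1r mulrC.
have hsW : \sum_(i < n.+1) iQ P`_i * W ^+ i = 0.
  have e1 : BQ = 1 * BQ by rewrite mul1r.
  move: hsQ; rewrite {1}e1 eAW (mulrC BQ W) (homog n (fun i => iQ P`_i)) => /eqP.
  rewrite mulf_eq0 expf_eq0 (negPf BQnz) andbF /= => /eqP hs2.
  by rewrite -[RHS]hs2; apply: eq_big => // i _; rewrite expr1n mulr1.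
have [V eV] := gauss_rat (P := P) Pn hsW.
exists V; apply: iQ_inj; rewrite rmorphM /= -/AQ -/BQ eAW eV; done.
Qed.


Section A.
Variables (L : fieldType) (t : L).
Hypothesis htr : transcendental_over_Q t.

Definition phi (P : {poly int}) : L := (map_poly (fun n : int => n%:~R) P).[t].
HB.instance Definition _ := GRing.RMorphism.copy phi (horner_eval t \o map_poly (intmul (1:L))).
Definition phiQ (P : {poly rat}) : L := (map_poly (fun q : rat => ratr q) P).[t].


Lemma phiE P : phi P = (map_poly (fun n : int => n%:~R) P).[t]. Proof. by []. Qed.

Lemma phi_phiQ P : phi P = phiQ (map_poly (fun n : int => n%:~R) P).
Proof.
rewrite /phi /phiQ /= -map_poly_comp_id0; last by rewrite (ratr_int _ 0).
f_equal; apply: eq_map_poly => n /=; by rewrite ratr_int.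
Qed.

Lemma phiQ_inj P : phiQ P = 0 -> P = 0.
Proof. by move=> h; apply: htr; rewrite /root -[_.[t]]/(phiQ P) h. Qed.

Lemma phi_inj P : phi P = 0 -> P = 0.
Proof.
rewrite phi_phiQ => /phiQ_inj h; apply/polyP => i; rewrite coef0.
by move/polyP: h => /(_ i); rewrite coef_map coef0 /= => /eqP; rewrite intr_eq0 => /eqP.
Qed.

Lemma phi_injective : injective phi.
Proof. move=> P Q e; apply/eqP; rewrite -subr_eq0; apply/eqP; apply: phi_inj; rewrite rmorphB; apply/eqP; rewrite subr_eq0; apply/eqP; exact: e. Qed.


Lemma lift (Q : {poly int} -> Prop) (p : {poly L}) : Q 0 ->
  coefs_in (fun z => exists P, Q P /\ z = phi P) p ->
  exists PP : {poly {poly int}}, map_poly phi PP = p /\ forall i, Q PP`_i.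
Proof.
move=> Q0 hp.
have hf : forall i, {P | Q P /\ p`_i = phi P}.
  by move=> i; apply: constructive_indefinite_description; case: (hp i) => P [] *; exists P.
pose f i := sval (hf i).
exists (\poly_(i < size p) f i); split.
  apply/polyP => i; rewrite coef_map /= coef_poly.
  case: ltnP => hi; first by case: (svalP (hf i)).
  by rewrite rmorph0 nth_default.
move=> i; rewrite coef_poly; case: ltnP => _ //; by case: (svalP (hf i)).
Qed.


Lemma phiX : phi 'X = t.
Proof. by rewrite /phi map_polyX hornerX. Qed.
Lemma phiC (c : int) : phi c%:P = c%:~R.
Proof. by rewrite /phi map_polyC hornerC. Qed.
Lemma map_phi_inj : injective (map_poly phi).
Proof. apply: map_inj_poly; [exact: phi_injective | exact: rmorph0]. Qed.
Lemma size_map_phi PP : size (map_poly phi PP) = size PP.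
Proof. apply: size_map_inj_poly; [exact: phi_injective | exact: rmorph0]. Qed.
Lemma lead_map_phi PP : lead_coef (map_poly phi PP) = phi (lead_coef PP).
Proof. apply: lead_coef_map_inj; [exact: phi_injective | exact: rmorph0]. Qed.
Lemma lift_monic PP : map_poly phi PP \is monic -> PP \is monic.
Proof.
move/monicP; rewrite lead_map_phi -(rmorph1 phi) => /phi_injective h.
by apply/monicP.
Qed.
Lemma t_neq0 : t != 0.
Proof.
apply/eqP => t0; have : phi 'X = 0 by rewrite phiX.
move/phi_inj/eqP; by rewrite polyX_eq0.
Qed.

Lemma S_to_Zt z : integral_closure (Zt2t3 t) z -> Zt t z.
Proof.
move=> [[a [b [[A [_ ea]] [[B [_ eb]] [bnz ez]]]]] [p [mp [cp rp]]]].
have [PP [ePP cPP]] := @lift (fun P : {poly int} => P`_1 = 0) p (coef0 _ _) cp.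
have mPP : PP \is monic by apply: lift_monic; rewrite ePP.
set n := (size PP).-1.
have sPP : size PP = n.+1.
  by rewrite /n prednK // size_poly_gt0 monic_neq0.
have Pn : PP`_n = 1 by move/monicP: mPP.
have sp : size p = n.+1 by rewrite -ePP size_map_phi.
have zb : z * b = a by rewrite ez divfK.
have hs : \sum_(i < n.+1) PP`_i * A ^+ i * B ^+ (n - i) = 0.
  apply: phi_inj; rewrite rmorph_sum /=.
  have e2 : b ^+ n * p.[z] = 0 by rewrite (rootP rp) mulr0.
  rewrite -[RHS]e2 (horner_coef_wide z (eq_leq sp)).
  transitivity (\sum_(i < n.+1) p`_i * (z * b) ^+ i * (1 * b) ^+ (n - i)).
    apply: eq_big => // i _; rewrite !rmorphM !rmorphXn /= mul1r zb.
    by rewrite -ePP coef_map /= ea eb.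
  rewrite (homog n (fun i => p`_i)); congr (_ * _); apply: eq_big => // i _.
  by rewrite expr1n mulr1.
have Bnz : B != 0.
  by apply/eqP => B0; move/eqP: bnz; apply; rewrite eb B0 map_poly0 horner0.
have [V eV] := int_closed Bnz Pn hs.
have ebb : phi B = b by rewrite eb.
have eaa : phi A = a by rewrite ea.
exists V; by rewrite ez -eaa eV rmorphM /= ebb mulrAC divff // mul1r.
Qed.

Lemma Zt_to_S z : Zt t z -> integral_closure (Zt2t3 t) z.
Proof.
move=> [P ez]; change (z = phi P) in ez.
split.
  exists (phi ('X^2 * P)), (phi 'X^2); split; first by exists ('X^2 * P); rewrite coefXnM.
  split; first by exists 'X^2; rewrite coefXn.
  have b0 : phi 'X^2 != 0 by rewrite rmorphXn /= phiX expf_neq0 // t_neq0.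
  by split => //; rewrite rmorphM /= -ez mulrAC divff // mul1r.
set c := P`_1; set Q := P - c *: 'X.
have hQ : Q`_1 = 0 by rewrite /Q coefB coefZ coefX /= mulr1 subrr.
have ePQ : P = Q + c *: 'X by rewrite /Q subrK.
set PP : {poly {poly int}} := ('X - (Q + c *: 'X)%:P) * ('X - (Q - c *: 'X)%:P).
have ePP : PP = 'X^2 + (- (Q *+ 2))%:P * 'X + (Q ^+ 2 - (c *: 'X) ^+ 2)%:P.
  rewrite /PP !rmorphB !rmorphD !rmorphXn rmorphN /= polyCN polyCMn /Q !rmorphB /=; ring.
exists (map_poly phi PP); split; first by apply: monic_map; rewrite /PP monicMl monicXsubC.
split.
  move=> i; rewrite coef_map /=; exists PP`_i; split => //.
  rewrite ePP !coefD coefXn coefMX !coefC.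
  case: i => [|[|[|i]]] /=.
  - by rewrite !coef0 !add0r coefB !expr2 !coef1M hQ !coefZ !coefX /= !mulr0 !mul0r ?subr0 ?addr0.
  - by rewrite !coef0 add0r addr0 coefN coefMn hQ mul0rn oppr0.
  - by rewrite !coef0 !addr0 coef1.
  - by rewrite !coef0 !addr0.
apply/rootP; rewrite /PP rmorphM /= hornerM !rmorphB /= !map_polyX !map_polyC /= !hornerXsubC.
by rewrite -ePQ -ez subrr mul0r.
Qed.

Lemma part3 f : f \is monic -> coefs_in (Zt2t3 t) f -> (2 < size f)%N ->
  decomposable_over (integral_closure (Zt2t3 t)) f -> decomposable_over (Zt2t3 t) f.
Proof.
move=> mf cf sf [_ [g [h [cg [ch [sg [sh efgh]]]]]]].
have cg' : coefs_in (fun z => exists P : {poly int}, True /\ z = phi P) g.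
  by move=> i; case: (S_to_Zt (cg i)) => P e; exists P.
have ch' : coefs_in (fun z => exists P : {poly int}, True /\ z = phi P) h.
  by move=> i; case: (S_to_Zt (ch i)) => P e; exists P.
have [G [eG _]] := @lift (fun _ => True) g I cg'.
have [H [eH _]] := @lift (fun _ => True) h I ch'.
have [F [eF cF]] := @lift (fun P : {poly int} => P`_1 = 0) f (coef0 _ _) cf.
have eFGH : F = G \Po H by apply: map_phi_inj; rewrite map_comp_poly eF eG eH.
have mF : F \is monic by apply: lift_monic; rewrite eF.
have sG : (2 < size G)%N by rewrite -size_map_phi eG.
have sH : (2 < size H)%N by rewrite -size_map_phi eH.
have sH1 : (1 < size H)%N by apply: ltn_trans sH.
set u := lead_coef H; set c0 := H`_0.
have lF : lead_coef F = lead_coef G * u ^+ (size G).-1 by rewrite eFGH lead_coef_comp.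
have uu : u \is a GRing.unit.
  apply/unitrPr; exists (lead_coef G * u ^+ (size G).-2).
  move/monicP: mF; rewrite lF => <-; rewrite mulrCA -exprS.
  by case: (size G) sG => [|[|n]].
have unz : u != 0 by apply: contraTneq uu => ->; rewrite unitr0.
set w := u^-1.
have wnz : w != 0 by rewrite invr_eq0.
set H' := w *: (H - c0%:P).
set K : {poly {poly int}} := u *: 'X + c0%:P.
set G' := G \Po K.
have eK : K \Po H' = H.
  by rewrite /K comp_polyD comp_polyZ comp_polyX comp_polyC /H' scalerA divrr // scale1r subrK.
have eF' : F = G' \Po H' by rewrite eFGH /G' -comp_polyA eK.
have sK : size K = 2.
  rewrite /K size_addl ?size_scale ?size_polyX //.
  by rewrite size_polyC; case: (c0 != 0).
have sG' : size G' = size G by exact: size_comp_poly2.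
have sHc0 : (size (- c0%:P) < size H)%N.
  by rewrite size_polyN size_polyC; case: (c0 != 0) => //; apply: ltn_trans sH1.
have sHc : size (H - c0%:P) = size H by rewrite size_addl.
have sH' : size H' = size H by rewrite /H' size_scale.
have mH' : H' \is monic.
  by apply/monicP; rewrite /H' lead_coefZ lead_coefDl // mulVr.
have H'0 : H'`_0 = 0 by rewrite /H' coefZ coefB coefC /= subrr mulr0.
have mG' : G' \is monic.
  apply/monicP; move/monicP: mF; rewrite eF' lead_coef_comp ?sH' //.
  by move/monicP: mH' => ->; rewrite expr1n mulr1.
have E1F : E1 (G' \Po H') = 0.
  by rewrite -eF'; apply/polyP => i; rewrite E1c cF coef0.
have sG2 : (2 < size G')%N by rewrite sG'.
have sH2 : (2 < size H')%N by rewrite sH'.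
have [E1G E1H] := key_deg mH' H'0 mG' sG2 sH2 E1F.
split => //.
exists (map_poly phi G'), (map_poly phi H').
split.
  move=> i; rewrite coef_map; exists G'`_i; split => //.
  by have := congr1 (fun p : {poly int} => p`_i) E1G; rewrite E1c coef0.
split.
  move=> i; rewrite coef_map; exists H'`_i; split => //.
  by have := congr1 (fun p : {poly int} => p`_i) E1H; rewrite E1c coef0.
split; first by rewrite size_map_phi sG'.
split; first by rewrite size_map_phi sH'.
by rewrite -eF eF' map_comp_poly.
Qed.
End A.

Theorem mainTheorem3 (L : fieldType) (t : L)
  (hchar : [pchar L] =i pred0) (htr : transcendental_over_Q t) :
  let R := Zt2t3 t in
  let S := integral_closure R in
  (forall z, S z <-> Zt t z) /\
  ~ (forall z, Zt t z <-> R z) /\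
  (forall f : {poly L}, f \is monic -> coefs_in R f -> (2 < size f)%N ->
     decomposable_over S f -> decomposable_over R f).
Proof.
move=> R S; split; [|split].
- by move=> z; split; [exact: S_to_Zt | exact: Zt_to_S].
- move=> h.
  have : R t by apply/h; exists 'X; rewrite -[LHS](phiX t).
  case=> P [P1 eP].
  have ePX : P = 'X by apply: (phi_injective htr); rewrite phiX; exact: (esym eP).
  by move: P1; rewrite ePX coefX.
- by move=> f; exact: part3.
Qed.
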